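(* Let $0<k<n$, and let $A\in\mathbb{Z}^{k\times n}$ and $B\in\mathbb{Z}^{(n-k)\times n}$ be integer matrices of full row rank such that $A B^T=0$. Then \[ \operatorname{ndet}(L_R(A))=\operatorname{ndet}(L_R(B)), \] that is, \[ \frac{\sqrt{\det(AA^T)}}{\det(L_C(A))}=\frac{\sqrt{\det(BB^T)}}{\det(L_C(B))}. \]
   Context: For an integer matrix $M\in\mathbb{Z}^{m\times n}$, $L_R(M)\subseteq\mathbb{Z}^n$ denotes the lattice generated by the rows of $M$ and $L_C(M)\subseteq\mathbb{Z}^m$ the lattice generated by the columns of $M$. For a lattice $L$ with basis matrix $V$ (a matrix whose rows form a $\mathbb{Z}$-basis of $L$), $\det(L)=\sqrt{\det(VV^T)}$, independent of the choice of basis. For a lattice $\Lambda$ with basis matrix $M$ of full row rank, the normalized determinant is $\operatorname{ndet}(\Lambda)=\det(L_R(M))/\det(L_C(M))$. *)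

(* Defs.v *)
From HB Require Import structures.
From mathcomp Require Import all_boot all_order all_algebra.
Set Implicit Arguments. Unset Strict Implicit. Unset Printing Implicit Defensive.
Import Order.TTheory GRing.Theory Num.Theory.
Local Open Scope ring_scope.

Definition in_latR (m n : nat) (M : 'M[int]_(m, n)) (v : 'rV[int]_n) : Prop :=
  exists c : 'rV[int]_m, v = c *m M.

Definition in_latC (m n : nat) (M : 'M[int]_(m, n)) (v : 'rV[int]_m) : Prop :=
  in_latR M^T v.

Definition lat_basis (r n : nat) (V : 'M[int]_(r, n)) (L : 'rV[int]_n -> Prop)
  : Prop :=
  (forall v, L v <-> in_latR V v) /\ (forall c : 'rV[int]_r, c *m V = 0 -> c = 0).

Definition gram_sqrt (R : rcfType) (r n : nat) (V : 'M[int]_(r, n)) : R :=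
  Num.sqrt ((\det (V *m V^T))%:~R).

Definition full_row_rank (m n : nat) (M : 'M[int]_(m, n)) : bool :=
  row_free (map_mx (intr : int -> rat) M).

(* Main.v *)
Require Import Defs.
From HB Require Import structures.
From mathcomp Require Import all_boot all_order all_algebra.
Set Implicit Arguments. Unset Strict Implicit. Unset Printing Implicit Defensive.
Import Order.TTheory GRing.Theory Num.Theory.
Local Open Scope ring_scope.

Lemma int_sq1 (x y : int) : x * y = 1 -> x ^+ 2 = 1.
Proof.
rewrite mulrC => /intUnitRing.unitzPl; rewrite qualifE => /orP[]/eqP-> //.
Qed.

Lemma inj_rows (r m : nat) (V : 'M[int]_(r,m)) :
  (forall c : 'rV_r, c *m V = 0 -> c = 0) ->
  forall p (X : 'M_(p,r)), X *m V = 0 -> X = 0.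
Proof.
move=> H p X HX; apply/row_matrixP => i; rewrite row0; apply: H.
by rewrite -row_mul HX row0.
Qed.

Lemma basis_trans (m r1 r2 : nat) (L : 'rV[int]_m -> Prop)
  (V1 : 'M_(r1,m)) (V2 : 'M_(r2,m)) :
  lat_basis V1 L -> lat_basis V2 L -> exists T : 'M_(r1,r2), V1 = T *m V2.
Proof.
move=> [H1 _] [H2 _].
have: forall i, exists c : 'rV_r2, row i V1 = c *m V2.
  move=> i; apply/H2/H1; exists (delta_mx 0 i); by rewrite -rowE.
case/fin_all_exists => f Hf; exists (\matrix_i f i).
apply/row_matrixP => i; rewrite row_mul rowK; exact: Hf.
Qed.

Lemma basis_gram (m r1 r2 : nat) (L : 'rV[int]_m -> Prop)
  (V1 : 'M_(r1,m)) (V2 : 'M_(r2,m)) :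
  lat_basis V1 L -> lat_basis V2 L -> \det (V1 *m V1^T) = \det (V2 *m V2^T).
Proof.
move=> B1 B2.
have [T ET] := basis_trans B1 B2; have [S ES] := basis_trans B2 B1.
have TS : T *m S = 1%:M.
  apply/eqP; rewrite -subr_eq0; apply/eqP; apply: (inj_rows B1.2).
  by rewrite mulmxBl mul1mx -mulmxA -ES -ET subrr.
have ST : S *m T = 1%:M.
  apply/eqP; rewrite -subr_eq0; apply/eqP; apply: (inj_rows B2.2).
  by rewrite mulmxBl mul1mx -mulmxA -ET -ES subrr.
have r12 : (r1 <= r2)%N.
  have: \rank (map_mx (intr : int -> rat) (T *m S)) = r1.
    by rewrite TS map_mx1 mxrank1.
  move=> <-; rewrite map_mxM; apply: leq_trans (mxrankM_maxl _ _) (rank_leq_col _).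
have r21 : (r2 <= r1)%N.
  have: \rank (map_mx (intr : int -> rat) (S *m T)) = r2.
    by rewrite ST map_mx1 mxrank1.
  move=> <-; rewrite map_mxM; apply: leq_trans (mxrankM_maxl _ _) (rank_leq_col _).
have er : r1 = r2 by apply/eqP; rewrite eqn_leq r12 r21.
subst r2.
have dTS : \det T * \det S = 1 by rewrite -det_mulmx TS det1.
rewrite ET trmx_mul !mulmxA !det_mulmx -mulmxA det_mulmx det_tr.
by rewrite mulrC mulrA -expr2 (int_sq1 dTS) mul1r.
Qed.

Lemma smith_dec k n (A : 'M[int]_(k,n)) : full_row_rank A ->
  exists (U : 'M[int]_k) (R : 'M[int]_n),
    [/\ \det U != 0, R \in unitmx & A = U *m ((pid_mx k : 'M_(k,n)) *m R)].
Proof.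
move=> FR.
case: (int_Smith_normal_form A) => L uL [R uR [d _ EA]].
set Dd : 'M[int]_k := diag_mx (\row_(i<k) d`_i).
have ED : \matrix_(i < k, j < n) (d`_i *+ (i == j :> nat)) = Dd *m pid_mx k.
  apply/matrixP => i j; rewrite mul_diag_mx !mxE ltn_ord andbT.
  by case: (i == j :> nat); rewrite ?mulr1n ?mulr0n ?mulr1 ?mulr0.
exists (L *m Dd), R; split => //; last by rewrite EA ED !mulmxA.
have : (k <= \rank (map_mx (intr : int -> rat) (L *m Dd)))%N.
  move: FR; rewrite /full_row_rank /row_free => /eqP e.
  by rewrite -{1}e EA ED -!mulmxA mulmxA map_mxM mxrankM_maxl.
move=> H.
have : row_free (map_mx (intr : int -> rat) (L *m Dd)).
  by rewrite /row_free eqn_leq rank_leq_row H.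
rewrite row_free_unit unitmxE unitfE det_map_mx.
by rewrite intr_eq0.
Qed.

Lemma det_cancel k n (U : 'M[int]_k) (V : 'M[int]_n) (X : 'M[int]_(k, n)) :
  \det U != 0 -> \det V != 0 -> U *m X *m V = 0 -> X = 0.
Proof.
move=> hU hV E.
have : \adj U *m (U *m X *m V) *m \adj V = 0 by rewrite E mulmx0 mul0mx.
rewrite !mulmxA mul_adj_mx -!mulmxA mul_mx_adj mul_scalar_mx mul_mx_scalar.
rewrite scalerA => /eqP; rewrite scalemx_eq0 mulf_eq0 (negbTE hU) (negbTE hV) /=.
by move/eqP.
Qed.

Lemma lbasis_of k n (hkn : (k <= n)%N) (U : 'M[int]_k) (R : 'M[int]_n) (A : 'M[int]_(k,n)) :
  \det U != 0 -> R \in unitmx -> A = U *m ((pid_mx k : 'M_(k,n)) *m R) ->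
  lat_basis U^T (in_latC A).
Proof.
move=> hU uR EA; split.
  move=> v; rewrite /in_latC /in_latR; split.
    case=> c ->; exists (c *m R^T *m (pid_mx k : 'M_(k,n))^T).
    by rewrite EA !trmx_mul !mulmxA.
  case=> c ->; exists (c *m (pid_mx k : 'M_(k,n)) *m (invmx R)^T).
  rewrite EA !trmx_mul !mulmxA -(mulmxA _ (invmx R)^T) -trmx_mul mulmxV //.
  rewrite trmx1 mulmx1 -(mulmxA c) tr_pid_mx mul_pid_mx minnn (minn_idPr hkn).
  by rewrite pid_mx_1 mulmx1.
move=> c Hc.
apply: (@det_cancel 1 k 1%:M U^T c); rewrite ?det1 ?oner_eq0 ?det_tr //.
by rewrite mul1mx Hc.
Qed.

Lemma core k m (R R' : 'M[int]_(k+m)) : R \in unitmx -> R' \in unitmx ->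
  ((pid_mx m : 'M_(m,k+m)) *m R') *m ((pid_mx k : 'M_(k,k+m)) *m R)^T = 0 ->
  \det (((pid_mx k : 'M_(k,k+m)) *m R) *m ((pid_mx k : 'M_(k,k+m)) *m R)^T)
  = \det (((pid_mx m : 'M_(m,k+m)) *m R') *m ((pid_mx m : 'M_(m,k+m)) *m R')^T).
Proof.
move=> uR uR'.
have EP : (pid_mx k : 'M_(k,k+m)) *m R = usubmx R.
  by rewrite pid_mx_row -{1}(vsubmxK R) mul_row_col mul1mx mul0mx addr0.
rewrite EP.
set Q := (pid_mx m : 'M_(m,k+m)) *m R'.
set P := usubmx R; set P' := dsubmx R.
set Ri := invmx R; set X := lsubmx Ri; set Y := rsubmx Ri.
have ER : R = col_mx P P' by rewrite vsubmxK.
have ERi : Ri = row_mx X Y by rewrite hsubmxK.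
have := mulmxV uR; rewrite -/Ri {1}ER {1}ERi mul_col_row scalar_mx_block.
case/eq_block_mx => PX PY P'X P'Y.
have dRRi : \det R * \det Ri = 1 by rewrite -det_mulmx mulmxV // det1.
have h1 : \det R * \det (col_mx P Y^T) = \det (P *m P^T).
  rewrite -(det_tr (col_mx P Y^T)) -det_mulmx tr_col_mx trmxK {1}ER mul_col_row PY P'Y.
  by rewrite det_lblock det1 mulr1.
have h2 : \det (col_mx P Y^T) * \det Ri = \det (Y^T *m Y).
  rewrite -det_mulmx {1}ERi mul_col_row PX PY det_lblock det1 mul1r.
  by [].
have h3 : \det Ri = \det R.
  have e := int_sq1 dRRi.
  by rewrite -[\det Ri]mulr1 -e expr2 mulrA (mulrC (\det Ri)) dRRi mul1r.
have EPP : \det (P *m P^T) = \det (Y^T *m Y) by rewrite -h1 -h2 h3 mulrC.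
move=> QP.
set S := Q *m P'^T.
have EQ : Q = S *m Y^T.
  have e1 : R^T *m Ri^T = 1%:M by rewrite -trmx_mul mulVmx // trmx1.
  rewrite -{1}(mulmx1 Q) -e1 {1}ER {1}ERi tr_col_mx tr_row_mx mul_row_col.
  by rewrite mulmxDr !mulmxA QP mul0mx add0r.
set T := Y^T *m invmx R' *m (pid_mx m : 'M_(m,k+m))^T.
have ST : S *m T = 1%:M.
  rewrite /T !mulmxA -EQ /Q -(mulmxA _ R') mulmxV // mulmx1 tr_pid_mx mul_pid_mx.
  by rewrite minnn (minn_idPr (leq_addl _ _)) pid_mx_1.
have dST : \det S * \det T = 1 by rewrite -det_mulmx ST det1.
rewrite EPP EQ trmx_mul trmxK !mulmxA !det_mulmx -mulmxA det_mulmx det_tr.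
by rewrite mulrC mulrA -expr2 (int_sq1 dST) mul1r.
Qed.

Lemma sqrt_ratio (R : rcfType) (x y : int) : x != 0 ->
  Num.sqrt ((x ^+ 2 * y)%:~R : R) / Num.sqrt ((x ^+ 2)%:~R) = Num.sqrt (y%:~R).
Proof.
move=> hx.
have h0 : (0 : R) < (x ^+ 2)%:~R.
  by rewrite ltr0z exprn_even_gt0 //= hx.
rewrite intrM sqrtrM ?ltW // mulrC mulrA mulVf ?mul1r //.
by rewrite sqrtr_eq0 -ltNge.
Qed.

Lemma gramA k n (U : 'M[int]_k) (P : 'M[int]_(k, n)) :
  \det ((U *m P) *m (U *m P)^T) = \det U ^+ 2 * \det (P *m P^T).
Proof.
by rewrite trmx_mul !mulmxA !det_mulmx -mulmxA det_mulmx det_tr mulrC mulrA expr2 mulrC.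
Qed.

Lemma gramU k (U : 'M[int]_k) : \det (U^T *m U^T^T) = \det U ^+ 2.
Proof. by rewrite trmxK det_mulmx det_tr expr2. Qed.

Theorem theorem2p5 (R : rcfType) (k n : nat) (hk : (0 < k)%N) (hkn : (k < n)%N)
  (A : 'M[int]_(k, n)) (B : 'M[int]_(n - k, n)) :
  full_row_rank A -> full_row_rank B -> A *m B^T = 0 ->
  (exists (r : nat) (VA : 'M[int]_(r, k)), lat_basis VA (in_latC A)) /\
  (exists (s : nat) (VB : 'M[int]_(s, n - k)), lat_basis VB (in_latC B)) /\
  (forall (r s : nat) (VA : 'M[int]_(r, k)) (VB : 'M[int]_(s, n - k)),
     lat_basis VA (in_latC A) -> lat_basis VB (in_latC B) ->
     gram_sqrt R A / gram_sqrt R VA = gram_sqrt R B / gram_sqrt R VB).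
Proof.
move=> FA FB AB.
set m := (n - k)%N in B FB AB *.
have en : n = (k + m)%N by rewrite /m subnKC // ltnW.
clearbody m; subst n.
have [U [Rr [hU uR EA]]] := smith_dec FA.
have [U' [Rr' [hU' uR' EB]]] := smith_dec FB.
have bA := lbasis_of (leq_addr _ _) hU uR EA.
have bB := lbasis_of (leq_addl _ _) hU' uR' EB.
split; first by exists k, U^T.
split; first by exists m, U'^T.
move=> r s VA VB hA hB.
rewrite /gram_sqrt (basis_gram hA bA) (basis_gram hB bB) !gramU EA EB !gramA.
rewrite !sqrt_ratio //.
rewrite (core uR uR') //.
apply: (@det_cancel m k U' U^T); rewrite ?det_tr //.
have BA : B *m A^T = 0 by rewrite -(trmxK B) -trmx_mul AB trmx0.
by move: BA; rewrite EA EB trmx_mul !mulmxA.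
Qed.
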